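(* Let $a_0,a_1,a_2,a_3\in\mathbb{R}$ and consider the binary quartic form $$f(x,y)=-x^4+a_3x^3y+a_2x^2y^2+a_1xy^3+a_0y^4 .$$ Let $$b_0=\tfrac14\,(-a_1^2-a_1a_2a_3+a_0a_3^2),\quad b_1=-\tfrac14\,(4a_0+a_2^2+a_1a_3),\quad b_2=-\tfrac{a_2}{2},\quad \lambda_0=\frac{4b_2+2\sqrt{3b_1+4b_2^2}}{3}.$$ Then $f$ is negative semi-definite if and only if $\lambda_0$ is real and $$\lambda_0\ge \frac{a_3^2}{4},\qquad -\tfrac14\lambda_0^3+b_2\lambda_0^2+b_1\lambda_0+b_0\ge 0 .$$ Moreover, $f$ is negative definite if and only if $\lambda_0$ is real and $$\lambda_0> \frac{a_3^2}{4},\qquad -\tfrac14\lambda_0^3+b_2\lambda_0^2+b_1\lambda_0+b_0> 0 .$$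
   Context: A binary form $f(x,y)$ with real coefficients is negative definite (resp. negative semi-definite) if $f(x,y)<0$ (resp. $f(x,y)\le 0$) for all real $x,y$ not both zero. The quantity $\lambda_0$ is real exactly when $3b_1+4b_2^2\ge 0$. *)

(* Defs.v *)
From Stdlib Require Import Reals.
Open Scope R_scope.

Definition quartic (a0 a1 a2 a3 x y : R) : R :=
  - x ^ 4 + a3 * x ^ 3 * y + a2 * x ^ 2 * y ^ 2 + a1 * x * y ^ 3 + a0 * y ^ 4.

Definition neg_definite (f : R -> R -> R) : Prop :=
  forall x y : R, ~ (x = 0 /\ y = 0) -> f x y < 0.
Definition neg_semidefinite (f : R -> R -> R) : Prop :=
  forall x y : R, ~ (x = 0 /\ y = 0) -> f x y <= 0.

Definition b0 (a0 a1 a2 a3 : R) : R := / 4 * (- a1 ^ 2 - a1 * a2 * a3 + a0 * a3 ^ 2).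
Definition b1 (a0 a1 a2 a3 : R) : R := - (/ 4) * (4 * a0 + a2 ^ 2 + a1 * a3).
Definition b2 (a0 a1 a2 a3 : R) : R := - (a2 / 2).

(* discriminant-like quantity: lambda0 is real exactly when it is >= 0 *)
Definition lam_disc (a0 a1 a2 a3 : R) : R :=
  3 * b1 a0 a1 a2 a3 + 4 * (b2 a0 a1 a2 a3) ^ 2.

(* lambda0 (only meaningful when lam_disc >= 0, which is always required) *)
Definition lambda0 (a0 a1 a2 a3 : R) : R :=
  (4 * b2 a0 a1 a2 a3 + 2 * sqrt (lam_disc a0 a1 a2 a3)) / 3.

Definition cubic_val (a0 a1 a2 a3 l : R) : R :=
  - (/ 4) * l ^ 3 + b2 a0 a1 a2 a3 * l ^ 2 + b1 a0 a1 a2 a3 * l + b0 a0 a1 a2 a3.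

(* Main.v *)
Require Import Defs.
From Stdlib Require Import Reals Lra Psatz.
From Coquelicot Require Import Coquelicot.
Open Scope R_scope.

Definition cp (a0 a1 a2 a3 l : R) : R :=
  - (3/4) * l ^ 2 + 2 * b2 a0 a1 a2 a3 * l + b1 a0 a1 a2 a3.

Lemma cp_lam0 a0 a1 a2 a3 : 0 <= lam_disc a0 a1 a2 a3 ->
  cp a0 a1 a2 a3 (lambda0 a0 a1 a2 a3) = 0.
Proof.
  intro H. pose proof (sqrt_sqrt _ H) as Hs.
  unfold cp, lambda0. set (s := sqrt _) in *.
  replace 0 with ((lam_disc a0 a1 a2 a3 - s*s)/3) by lra.
  unfold lam_disc. field.
Qed.

Lemma decomp a0 a1 a2 a3 l x y :
  - quartic a0 a1 a2 a3 x y =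
  (x^2 - a3/2*x*y - (l+a2)/2*y^2)^2 +
  y^2 * ((l - a3^2/4) * x^2 + (- a3*(l+a2)/2 - a1) * x * y + (-a0 - (l+a2)^2/4) * y^2).
Proof. unfold quartic. field. Qed.

Lemma disc_c a0 a1 a2 a3 l :
  (- a3*(l+a2)/2 - a1)^2 - 4 * (l - a3^2/4) * (-a0 - (l+a2)^2/4) =
  -4 * cubic_val a0 a1 a2 a3 l.
Proof. unfold cubic_val, b0, b1, b2. field. Qed.

Lemma cp_id a0 a1 a2 a3 l :
  cp a0 a1 a2 a3 l = a3 * (- a3*(l+a2)/2 - a1) / 4 + (-a0 - (l+a2)^2/4)
    + (l - a3^2/4) * (-(l+a2)/2).
Proof. unfold cp, b1, b2. field. Qed.
Lemma cubic_step a0 a1 a2 a3 x : 0 <= cp a0 a1 a2 a3 x ->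
  0 <= lam_disc a0 a1 a2 a3 /\ x <= lambda0 a0 a1 a2 a3 /\
  cubic_val a0 a1 a2 a3 x <= cubic_val a0 a1 a2 a3 (lambda0 a0 a1 a2 a3) /\
  (0 < cp a0 a1 a2 a3 x -> x < lambda0 a0 a1 a2 a3 /\
     cubic_val a0 a1 a2 a3 x < cubic_val a0 a1 a2 a3 (lambda0 a0 a1 a2 a3)).
Proof.
  intro H.
  assert (Hd : 0 <= lam_disc a0 a1 a2 a3).
  { assert (E : lam_disc a0 a1 a2 a3 - (3*x/2 - 2 * b2 a0 a1 a2 a3)^2 = 3 * cp a0 a1 a2 a3 x)
      by (unfold lam_disc, cp; field).
    pose proof (pow2_ge_0 (3*x/2 - 2 * b2 a0 a1 a2 a3)). lra. }
  pose proof (sqrt_sqrt _ Hd) as Hs. pose proof (sqrt_pos (lam_disc a0 a1 a2 a3)) as Hs0.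
  unfold lambda0, cubic_val. unfold cp in *. unfold lam_disc in *.
  set (s := sqrt _) in *. clearbody s.
  set (B1 := b1 a0 a1 a2 a3) in *. set (B2 := b2 a0 a1 a2 a3) in *.
  set (B0 := b0 a0 a1 a2 a3) in *. clearbody B0 B1 B2.
  assert (EB1 : B1 = (s*s - 4*B2^2)/3) by lra. subst B1.
  set (r := (4 * B2 + 2 * s) / 3).
  set (s' := (4 * B2 - 2 * s) / 3).
  assert (Ecp : - (3 / 4) * x ^ 2 + 2 * B2 * x + (s * s - 4 * B2 ^ 2) / 3 = -(3/4) * (x - r) * (x - s'))
    by (unfold r, s'; field).
  assert (Ec : (- / 4 * r ^ 3 + B2 * r ^ 2 + (s * s - 4 * B2 ^ 2) / 3 * r + B0) -
               (- / 4 * x ^ 3 + B2 * x ^ 2 + (s * s - 4 * B2 ^ 2) / 3 * x + B0)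
               = (r - x)^2 * (r + 2*x - 3*s') / 8) by (unfold r, s'; field).
  fold r. rewrite Ecp in H.
  assert (Hrs : r - s' = 4*s/3) by (unfold r, s'; field).
  assert (Hx1 : s' <= x) by nra.
  assert (Hx2 : x <= r) by nra.
  split; [lra|]. split; [lra|]. split.
  - assert (0 <= (r - x)^2 * (r + 2*x - 3*s') / 8).
    { apply Rmult_le_pos; [|lra]. apply Rmult_le_pos; [nra|lra]. }
    lra.
  - intro H'. rewrite Ecp in H'.
    assert (Hx3 : x < r) by nra.
    assert (Hx4 : s' < x) by nra.
    split; [lra|].
    assert (0 < (r - x)^2 * (r + 2*x - 3*s') / 8).
    { apply Rmult_lt_0_compat; [|lra]. apply Rmult_lt_0_compat; [nra|lra]. }
    lra.
Qed.

Definition h a0 a1 a2 a3 t := - quartic a0 a1 a2 a3 t 1.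

Lemma hderiv a0 a1 a2 a3 t : derivable_pt_lim (h a0 a1 a2 a3) t
   (4*t^3 - 3*a3*t^2 - 2*a2*t - a1).
Proof.
  apply is_derive_Reals. unfold h, quartic. auto_derive; [exact I|]. ring.
Qed.

Lemma coercive a0 a1 a2 a3 : exists M, 0 < M /\
  forall t, M <= Rabs t -> h a0 a1 a2 a3 0 < h a0 a1 a2 a3 t.
Proof.
  exists (1 + Rabs a1 + Rabs a2 + Rabs a3).
  pose proof (Rabs_pos a1). pose proof (Rabs_pos a2). pose proof (Rabs_pos a3).
  split; [lra|]. intros t Ht.
  set (s := Rabs t) in *.
  assert (E3 : Rabs (a3 * t^3) = Rabs a3 * s^3) by (rewrite Rabs_mult, <- RPow_abs; reflexivity).
  assert (E2 : Rabs (a2 * t^2) = Rabs a2 * s^2) by (rewrite Rabs_mult, <- RPow_abs; reflexivity).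
  assert (E1 : Rabs (a1 * t) = Rabs a1 * s) by (rewrite Rabs_mult; reflexivity).
  assert (E4 : t^4 = s^4).
  { unfold s. rewrite RPow_abs. rewrite Rabs_pos_eq; [reflexivity|]. 
    replace (t^4) with ((t^2)^2) by ring. apply pow2_ge_0. }
  pose proof (Rle_abs (a3 * t^3)). pose proof (Rle_abs (a2 * t^2)). pose proof (Rle_abs (a1 * t)).
  assert (Hs1 : 1 <= s) by lra.
  assert (s^2 <= s^3) by nra. assert (s <= s^3) by nra.
  assert (Rabs a2 * s^2 <= Rabs a2 * s^3) by nra.
  assert (Rabs a1 * s <= Rabs a1 * s^3) by nra.
  assert (s^4 = s * s^3) by ring.
  assert (0 < s^3) by (apply pow_lt; lra).
  assert ((Rabs a1 + Rabs a2 + Rabs a3) * s^3 < s * s^3) by nra.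
  unfold h, quartic.
  replace (a2 * t ^ 2 * 1 ^ 2) with (a2 * t^2) by ring.
  replace (a3 * t ^ 3 * 1) with (a3 * t^3) by ring.
  replace (a1 * t * 1 ^ 3) with (a1 * t) by ring.
  replace (a2 * 0 ^ 2 * 1 ^ 2) with 0 by ring.
  replace (a3 * 0 ^ 3 * 1) with 0 by ring.
  replace (a1 * 0 * 1 ^ 3) with 0 by ring.
  replace (0 ^ 4) with 0 by ring.
  lra.
Qed.

Lemma has_min a0 a1 a2 a3 : exists ts, forall t, h a0 a1 a2 a3 ts <= h a0 a1 a2 a3 t.
Proof.
  destruct (coercive a0 a1 a2 a3) as [M [HM HMt]].
  destruct (continuity_ab_min (h a0 a1 a2 a3) (-M) M) as [mx [Hmx Hb]].
  - lra.
  - intros c _. apply derivable_continuous_pt. exists (4*c^3 - 3*a3*c^2 - 2*a2*c - a1).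
    apply hderiv.
  - exists mx. intro t.
    destruct (Rle_or_lt M (Rabs t)) as [Ht|Ht].
    + assert (h a0 a1 a2 a3 mx <= h a0 a1 a2 a3 0) by (apply Hmx; lra).
      pose proof (HMt t Ht). lra.
    + apply Hmx. apply Rabs_def2 in Ht. lra.
Qed.
Lemma key a0 a1 a2 a3 : exists ts, (forall t, h a0 a1 a2 a3 ts <= h a0 a1 a2 a3 t) /\
  0 <= (2*ts^2 - a3*ts - a2) - a3^2/4 /\
  cubic_val a0 a1 a2 a3 (2*ts^2 - a3*ts - a2) = ((2*ts^2 - a3*ts - a2) - a3^2/4) * h a0 a1 a2 a3 ts /\
  cp a0 a1 a2 a3 (2*ts^2 - a3*ts - a2) = h a0 a1 a2 a3 ts.
Proof.
  destruct (has_min a0 a1 a2 a3) as [ts Hts].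
  exists ts. split; [exact Hts|].
  pose (pr := exist _ _ (hderiv a0 a1 a2 a3 ts) : derivable_pt (h a0 a1 a2 a3) ts).
  assert (D0 : derive_pt (h a0 a1 a2 a3) ts pr = 0).
  { apply (deriv_minimum _ (ts - 1) (ts + 1)); [lra|lra|]. intros; apply Hts. }
  assert (D1 : derive_pt (h a0 a1 a2 a3) ts pr = 4*ts^3 - 3*a3*ts^2 - 2*a2*ts - a1).
  { apply derive_pt_eq_0. apply hderiv. }
  assert (Ea1 : a1 = 4*ts^3 - 3*a3*ts^2 - 2*a2*ts) by lra.
  clear D0 D1 pr. subst a1.
  set (k := (2*ts^2 - a3*ts - a2) - a3^2/4).
  assert (Eh : forall t, h a0 (4*ts^3 - 3*a3*ts^2 - 2*a2*ts) a2 a3 t - h a0 (4*ts^3 - 3*a3*ts^2 - 2*a2*ts) a2 a3 ts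
     = (t - ts)^2 * ((t + (2*ts - a3)/2)^2 + k)).
  { intro t. unfold h, quartic, k. field. }
  split.
  - destruct (Rle_or_lt 0 k) as [Hk|Hk]; [exact Hk|exfalso].
    set (x := -k). set (e := x / (1 + x)).
    assert (Hx : 0 < x) by (unfold x; lra).
    assert (He0 : 0 < e) by (unfold e; apply Rdiv_lt_0_compat; lra).
    assert (HeE : e * (1 + x) = x) by (unfold e; field; lra).
    assert (He1 : e < 1) by nra.
    assert (He2 : e <= x) by nra.
    assert (Hee : e*e < x) by nra.
    assert (Hneg : forall t, t <> ts -> (t + (2*ts - a3)/2)^2 = e^2 ->
              h a0 (4*ts^3 - 3*a3*ts^2 - 2*a2*ts) a2 a3 t < h a0 (4*ts^3 - 3*a3*ts^2 - 2*a2*ts) a2 a3 ts).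
    { intros t Ht Hq. pose proof (Eh t) as E. rewrite Hq in E.
      assert (0 < (t - ts)^2).
      { assert (t - ts <> 0) by lra. 
        replace ((t - ts)^2) with ((t-ts)*(t-ts)) by ring.
        apply Rsqr_pos_lt; assumption. }
      assert (e^2 + k < 0) by (unfold x in Hee; lra).
      assert ((t - ts) ^ 2 * (e ^ 2 + k) < 0) by nra. lra. }
    set (t0 := - ((2*ts - a3)/2)).
    destruct (Req_dec (t0 + e) ts) as [Heq|Hne].
    + assert (t0 - e <> ts) by lra.
      pose proof (Hneg (t0 - e) H) as HH.
      assert ((t0 - e + (2 * ts - a3) / 2) ^ 2 = e ^ 2) by (unfold t0; ring).
      specialize (HH H0). pose proof (Hts (t0 - e)). lra.
    + pose proof (Hneg (t0 + e) Hne) as HH.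
      assert ((t0 + e + (2 * ts - a3) / 2) ^ 2 = e ^ 2) by (unfold t0; ring).
      specialize (HH H). pose proof (Hts (t0 + e)). lra.
  - split; unfold cubic_val, cp, b0, b1, b2, h, quartic, k; field.
Qed.

Lemma quad_ge0 A B C x y : 0 <= A -> B^2 - 4*A*C <= 0 -> (A = 0 -> 0 <= C) ->
  0 <= A * x^2 + B * x * y + C * y^2.
Proof.
  intros HA HD HC. destruct (Req_dec A 0) as [H0|H0].
  - subst A. assert (B = 0) by nra. subst B. specialize (HC eq_refl).
    pose proof (pow2_ge_0 y). nra.
  - assert (0 < A) by lra.
    assert (E : 4*A*(A * x^2 + B * x * y + C * y^2) = (2*A*x + B*y)^2 + (4*A*C - B^2)*y^2) by ring.
    pose proof (pow2_ge_0 (2*A*x + B*y)). pose proof (pow2_ge_0 y).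
    assert (0 <= (4*A*C - B^2)*y^2) by nra.
    nra.
Qed.

Lemma quad_gt0 A B C x y : 0 < A -> B^2 - 4*A*C < 0 -> y <> 0 ->
  0 < A * x^2 + B * x * y + C * y^2.
Proof.
  intros HA HD Hy.
  assert (E : 4*A*(A * x^2 + B * x * y + C * y^2) = (2*A*x + B*y)^2 + (4*A*C - B^2)*y^2) by ring.
  pose proof (pow2_ge_0 (2*A*x + B*y)).
  assert (0 < y^2) by (replace (y^2) with (y*y) by ring; apply Rsqr_pos_lt; exact Hy).
  assert (0 < (4*A*C - B^2)*y^2) by nra.
  nra.
Qed.

Theorem corollary2 (a0 a1 a2 a3 : R) :
  (neg_semidefinite (quartic a0 a1 a2 a3) <->
     (0 <= lam_disc a0 a1 a2 a3 /\
      a3 ^ 2 / 4 <= lambda0 a0 a1 a2 a3 /\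
      0 <= cubic_val a0 a1 a2 a3 (lambda0 a0 a1 a2 a3)))
  /\
  (neg_definite (quartic a0 a1 a2 a3) <->
     (0 <= lam_disc a0 a1 a2 a3 /\
      a3 ^ 2 / 4 < lambda0 a0 a1 a2 a3 /\
      0 < cubic_val a0 a1 a2 a3 (lambda0 a0 a1 a2 a3))).
Proof.
  destruct (key a0 a1 a2 a3) as [ts [Hts [Hk [Hc Hcp]]]].
  set (l1 := 2*ts^2 - a3*ts - a2) in *.
  assert (Hnz : ~ (ts = 0 /\ 1 = 0)) by (intros [_ H]; lra).
  split; split.
  - intro HN. specialize (HN ts 1 Hnz).
    assert (Hm : 0 <= h a0 a1 a2 a3 ts) by (unfold h; lra).
    rewrite <- Hcp in Hm.
    destruct (cubic_step a0 a1 a2 a3 l1 Hm) as [Hd [Hl [Hcv _]]].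
    rewrite Hcp in Hm.
    assert (0 <= cubic_val a0 a1 a2 a3 l1) by (rewrite Hc; apply Rmult_le_pos; lra).
    split; [exact Hd|]. split; lra.
  - intros [Hd [Hl Hcv]] x y Hxy.
    set (L := lambda0 a0 a1 a2 a3) in *.
    rewrite <- (Ropp_involutive (quartic a0 a1 a2 a3 x y)).
    rewrite (decomp a0 a1 a2 a3 L x y).
    assert (0 <= (L - a3 ^ 2 / 4) * x ^ 2 + (- a3 * (L + a2) / 2 - a1) * x * y +
          (- a0 - (L + a2) ^ 2 / 4) * y ^ 2).
    { apply quad_ge0.
      - lra.
      - rewrite disc_c. lra.
      - intro HA. pose proof (cp_lam0 a0 a1 a2 a3 Hd) as Hcp0. fold L in Hcp0.
        rewrite cp_id in Hcp0. pose proof (disc_c a0 a1 a2 a3 L) as E.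
        rewrite HA in E. 
        assert (- a3 * (L + a2) / 2 - a1 = 0) by nra.
        rewrite HA, H in Hcp0. lra. }
    pose proof (pow2_ge_0 y). pose proof (pow2_ge_0 (x ^ 2 - a3 / 2 * x * y - (L + a2) / 2 * y ^ 2)).
    assert (0 <= y^2 * ((L - a3 ^ 2 / 4) * x ^ 2 + (- a3 * (L + a2) / 2 - a1) * x * y +
          (- a0 - (L + a2) ^ 2 / 4) * y ^ 2)) by (apply Rmult_le_pos; assumption).
    lra.
  - intro HN. specialize (HN ts 1 Hnz).
    assert (Hm : 0 < h a0 a1 a2 a3 ts) by (unfold h; lra).
    rewrite <- Hcp in Hm.
    destruct (cubic_step a0 a1 a2 a3 l1 (Rlt_le _ _ Hm)) as [Hd [_ [_ Hs]]].
    destruct (Hs Hm) as [Hl Hcv].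
    rewrite Hcp in Hm.
    assert (0 <= cubic_val a0 a1 a2 a3 l1) by (rewrite Hc; apply Rmult_le_pos; lra).
    split; [exact Hd|]. split; lra.
  - intros [Hd [Hl Hcv]] x y Hxy.
    set (L := lambda0 a0 a1 a2 a3) in *.
    destruct (Req_dec y 0) as [Hy|Hy].
    + subst y. assert (x <> 0) by (intro; apply Hxy; split; [assumption|reflexivity]).
      unfold quartic.
      assert (0 < x^2) by (replace (x^2) with (x*x) by ring; apply Rsqr_pos_lt; assumption).
      assert (0 < x^4) by (replace (x^4) with (x^2*x^2) by ring; apply Rmult_lt_0_compat; assumption).
      replace (- x ^ 4 + a3 * x ^ 3 * 0 + a2 * x ^ 2 * 0 ^ 2 + a1 * x * 0 ^ 3 + a0 * 0 ^ 4) with (- x^4) by ring.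
      lra.
    + rewrite <- (Ropp_involutive (quartic a0 a1 a2 a3 x y)).
      rewrite (decomp a0 a1 a2 a3 L x y).
      assert (0 < (L - a3 ^ 2 / 4) * x ^ 2 + (- a3 * (L + a2) / 2 - a1) * x * y +
          (- a0 - (L + a2) ^ 2 / 4) * y ^ 2).
      { apply quad_gt0; [lra| rewrite disc_c; lra | exact Hy]. }
      assert (0 < y^2) by (replace (y^2) with (y*y) by ring; apply Rsqr_pos_lt; exact Hy).
      pose proof (pow2_ge_0 (x ^ 2 - a3 / 2 * x * y - (L + a2) / 2 * y ^ 2)).
      assert (0 < y^2 * ((L - a3 ^ 2 / 4) * x ^ 2 + (- a3 * (L + a2) / 2 - a1) * x * y +
          (- a0 - (L + a2) ^ 2 / 4) * y ^ 2)) by (apply Rmult_lt_0_compat; assumption).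
      lra.
Qed.
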